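(* Let $f:(R,\mathfrak{m})\to(S,\mathfrak{n})$ and $g:(S,\mathfrak{n})\to(R,\mathfrak{m})$ be homomorphisms of finite length of Noetherian local rings. Then $g\circ f$ and $f\circ g$ are self-maps of finite length of $R$ and $S$ respectively, and $h_{\mathrm{alg}}(g\circ f,R)=h_{\mathrm{alg}}(f\circ g,S)$.
   Context: A homomorphism $u:(A,\mathfrak{a})\to(B,\mathfrak{b})$ of Noetherian local rings is of finite length if it is local and $u(\mathfrak{a})B$ is $\mathfrak{b}$-primary; its length is $\lambda(u):=\ell_B(B/u(\mathfrak{a})B)$. For a self-map of finite length $\psi$ of a Noetherian local ring $A$, the algebraic entropy is $h_{\mathrm{alg}}(\psi,A):=\lim_{n\to\infty}\frac1n\log\lambda(\psi^n)$ (the limit exists). *)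

(* Defs.v *)
From Stdlib Require Import Reals ClassicalEpsilon.
From HB Require Import structures.
From mathcomp Require Import all_boot all_order all_algebra.
Set Implicit Arguments. Unset Strict Implicit. Unset Printing Implicit Defensive.
Import GRing.Theory.
Local Open Scope ring_scope.

Definition is_ideal (A : comNzRingType) (I : A -> Prop) : Prop :=
  I 0 /\ (forall x y, I x -> I y -> I (x + y)) /\ (forall r x, I x -> I (r * x)).

Definition ideal_eq (A : Type) (I J : A -> Prop) : Prop := forall x, I x <-> J x.
Definition ideal_sub (A : Type) (I J : A -> Prop) : Prop := forall x, I x -> J x.

Definition proper_ideal (A : comNzRingType) (I : A -> Prop) : Prop :=
  is_ideal I /\ ~ I 1.

Definition is_max_ideal (A : comNzRingType) (m : A -> Prop) : Prop :=
  proper_ideal m /\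
  forall J, is_ideal J -> ideal_sub m J -> ideal_eq J m \/ J 1.

Definition noetherian (A : comNzRingType) : Prop :=
  forall I : nat -> A -> Prop,
    (forall n, is_ideal (I n)) -> (forall n, ideal_sub (I n) (I n.+1)) ->
    exists N, forall n, (N <= n)%N -> ideal_eq (I n) (I N).

Definition local_ring (A : comNzRingType) (m : A -> Prop) : Prop :=
  is_max_ideal m /\ forall J, is_max_ideal J -> ideal_eq J m.

Definition noetherian_local (A : comNzRingType) (m : A -> Prop) : Prop :=
  noetherian A /\ local_ring m.

Definition ext_ideal (A B : comNzRingType) (u : A -> B) (a : A -> Prop) : B -> Prop :=
  fun y => forall J, is_ideal J -> (forall x, a x -> J (u x)) -> J y.

Definition radical (B : comNzRingType) (I : B -> Prop) : B -> Prop :=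
  fun y => exists k : nat, I (y ^+ k).

Definition primary_to (B : comNzRingType) (I b : B -> Prop) : Prop :=
  proper_ideal I /\
  (forall x y, I (x * y) -> I x \/ radical I y) /\
  ideal_eq (radical I) b.

Definition local_map (A B : comNzRingType) (u : A -> B) (a : A -> Prop) (b : B -> Prop) :=
  forall x, a x -> b (u x).

(* Homomorphism of finite length (u is a ring morphism by its type / by
   construction as a composite of ring morphisms). *)
Definition finite_length_map (A B : comNzRingType) (u : A -> B)
  (a : A -> Prop) (b : B -> Prop) : Prop :=
  local_map u a b /\ primary_to (ext_ideal u a) b.

(* Strict chain of length k of submodules of B/I, i.e. of ideals containing I:
   J 0 c J 1 c ... c J k, all ideals containing I, strict inclusions. *)
Definition has_chain (B : comNzRingType) (I : B -> Prop) (k : nat) : Prop :=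
  exists J : nat -> B -> Prop,
    (forall i, (i <= k)%N -> is_ideal (J i) /\ ideal_sub I (J i)) /\
    (forall i, (i < k)%N -> ideal_sub (J i) (J i.+1) /\ ~ ideal_sub (J i.+1) (J i)).

(* Length l_B(B/I): the supremum of lengths of such chains (0 if unbounded,
   which never happens in the situations considered). *)
Definition colength (B : comNzRingType) (I : B -> Prop) : nat :=
  epsilon (inhabits 0%N)
    (fun n => has_chain I n /\ forall k, has_chain I k -> (k <= n)%N).

Definition map_length (A B : comNzRingType) (u : A -> B) (a : A -> Prop) : nat :=
  colength (ext_ideal u a).

(* Sequence (1/n) log lambda(psi^n), indexed from n = 1. *)
Definition entropy_seq (A : comNzRingType) (psi : A -> A) (a : A -> Prop) : nat -> R :=
  fun n => Rdiv (ln (INR (map_length (iter n.+1 psi) a))) (INR n.+1).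

Definition has_alg_entropy (A : comNzRingType) (psi : A -> A) (a : A -> Prop) (h : R) : Prop :=
  Un_cv (entropy_seq psi a) h.

(* Main.v *)
Require Import Defs.
From Stdlib Require Import Reals Lra Lia Classical ClassicalEpsilon FunctionalExtensionality.
From HB Require Import structures.
From mathcomp Require Import all_boot all_order all_algebra.
From mathcomp Require Import zify.
Set Implicit Arguments. Unset Strict Implicit. Unset Printing Implicit Defensive.
Import GRing.Theory.
Local Open Scope ring_scope.

Lemma id0 (B : comNzRingType) (I : B -> Prop) : is_ideal I -> I 0.
Proof. by case. Qed.
Lemma idD (B : comNzRingType) (I : B -> Prop) x y : is_ideal I -> I x -> I y -> I (x + y).
Proof. by case=> _ [H _]; apply: H. Qed.
Lemma idM (B : comNzRingType) (I : B -> Prop) r x : is_ideal I -> I x -> I (r * x).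
Proof. by case=> _ [_ H]; apply: H. Qed.
Lemma idMr (B : comNzRingType) (I : B -> Prop) r x : is_ideal I -> I x -> I (x * r).
Proof. by move=> HI Hx; rewrite mulrC; apply: idM. Qed.
Lemma idN (B : comNzRingType) (I : B -> Prop) x : is_ideal I -> I x -> I (- x).
Proof. by move=> HI Hx; rewrite -mulN1r; apply: idM. Qed.
Lemma idB (B : comNzRingType) (I : B -> Prop) x y : is_ideal I -> I x -> I y -> I (x - y).
Proof. by move=> HI Hx Hy; apply: idD => //; apply: idN. Qed.
Lemma id1 (B : comNzRingType) (I : B -> Prop) x : is_ideal I -> I 1 -> I x.
Proof. by move=> HI H1; rewrite -(mulr1 x); apply: idM. Qed.
Lemma idX (B : comNzRingType) (I : B -> Prop) x k : is_ideal I -> I x -> I (x ^+ k.+1).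
Proof. by move=> HI Hx; rewrite exprSr; apply: idM. Qed.

Definition fullI (B : comNzRingType) : B -> Prop := fun _ => True.
Definition capI (B : comNzRingType) (I J : B -> Prop) : B -> Prop := fun y => I y /\ J y.
Definition addI (B : comNzRingType) (I J : B -> Prop) : B -> Prop :=
  fun y => exists i j, I i /\ J j /\ y = i + j.
Definition addx (B : comNzRingType) (I : B -> Prop) (x : B) : B -> Prop :=
  fun y => exists i r, I i /\ y = i + r * x.

Lemma fullI_ideal (B : comNzRingType) : is_ideal (@fullI B).
Proof. by []. Qed.
Lemma capI_ideal (B : comNzRingType) (I J : B -> Prop) :
  is_ideal I -> is_ideal J -> is_ideal (capI I J).
Proof.
move=> HI HJ; split; first by split; apply: id0.
split; first by move=> x y [? ?] [? ?]; split; apply: idD.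
by move=> r x [? ?]; split; apply: idM.
Qed.
Lemma addI_ideal (B : comNzRingType) (I J : B -> Prop) :
  is_ideal I -> is_ideal J -> is_ideal (addI I J).
Proof.
move=> HI HJ; split; first by exists 0, 0; rewrite addr0; split; [apply: id0 | split; [apply: id0|]].
split.
  move=> x y [i [j [Hi [Hj ->]]]] [i' [j' [Hi' [Hj' ->]]]].
  exists (i + i'), (j + j'); split; first exact: idD.
  split; first exact: idD. by rewrite addrACA.
move=> r x [i [j [Hi [Hj ->]]]]; exists (r * i), (r * j); split; first exact: idM.
split; first exact: idM. by rewrite mulrDr.
Qed.
Lemma addx_ideal (B : comNzRingType) (I : B -> Prop) x :
  is_ideal I -> is_ideal (addx I x).
Proof.
move=> HI; split; first by exists 0, 0; rewrite mul0r addr0; split; [apply: id0|].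
split.
  move=> y z [i [r [Hi ->]]] [i' [r' [Hi' ->]]].
  exists (i + i'), (r + r'); split; first exact: idD. by rewrite mulrDl addrACA.
move=> s y [i [r [Hi ->]]]; exists (s * i), (s * r); split; first exact: idM.
by rewrite mulrDr mulrA.
Qed.
Lemma addx_sub (B : comNzRingType) (I : B -> Prop) x : ideal_sub I (addx I x).
Proof. by move=> y Hy; exists y, 0; rewrite mul0r addr0. Qed.
Lemma addx_in (B : comNzRingType) (I : B -> Prop) x : is_ideal I -> addx I x x.
Proof. by move=> HI; exists 0, 1; rewrite mul1r add0r; split; [apply: id0|]. Qed.
Lemma addx_min (B : comNzRingType) (I J : B -> Prop) x :
  is_ideal J -> ideal_sub I J -> J x -> ideal_sub (addx I x) J.
Proof. by move=> HJ HIJ Hx y [i [r [Hi ->]]]; apply: idD => //; [apply: HIJ | apply: idM]. Qed.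

Definition weakch (B : comNzRingType) (X Y : B -> Prop) (L : nat -> B -> Prop) (k : nat) : Prop :=
  (forall i, (i <= k)%N -> is_ideal (L i) /\ ideal_sub X (L i) /\ ideal_sub (L i) Y) /\
  (forall i, (i < k)%N -> ideal_sub (L i) (L i.+1)).
Definition stp (B : comNzRingType) (L : nat -> B -> Prop) (i : nat) : Prop :=
  ~ ideal_sub (L i.+1) (L i).
Definition sb (P : Prop) : nat := if excluded_middle_informative P then 1%N else 0%N.
Fixpoint nstrict (B : comNzRingType) (L : nat -> B -> Prop) (k : nat) : nat :=
  match k with 0 => 0%N | k'.+1 => (nstrict L k' + sb (stp L k'))%N end.
Definition bW (B : comNzRingType) (X Y : B -> Prop) (c : nat) : Prop :=
  forall L k, weakch X Y L k -> (nstrict L k <= c)%N.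

Lemma sb_le (P Q : Prop) : (P -> Q) -> (sb P <= sb Q)%N.
Proof.
move=> H; rewrite /sb; case: excluded_middle_informative => HP; case: excluded_middle_informative => HQ //.
by case: HQ; apply: H.
Qed.
Lemma sb_le1 (P : Prop) : (sb P <= 1)%N.
Proof. by rewrite /sb; case: excluded_middle_informative. Qed.
Lemma sb_true (P : Prop) : P -> sb P = 1%N.
Proof. by rewrite /sb; case: excluded_middle_informative. Qed.
Lemma sb_false (P : Prop) : ~ P -> sb P = 0%N.
Proof. by rewrite /sb; case: excluded_middle_informative. Qed.

Lemma nstrict_mono (B C : comNzRingType) (L : nat -> B -> Prop) (P : nat -> C -> Prop) k :
  (forall i, (i < k)%N -> stp L i -> stp P i) -> (nstrict L k <= nstrict P k)%N.
Proof.
elim: k => [|k IH] H //=.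
apply: leq_add; first by apply: IH => i Hi; apply: H; apply: ltnW.
by apply: sb_le; apply: H.
Qed.

Lemma nstrict_sum (B : comNzRingType) (L P Q : nat -> B -> Prop) k :
  (forall i, (i < k)%N -> stp L i -> stp P i \/ stp Q i) ->
  (nstrict L k <= nstrict P k + nstrict Q k)%N.
Proof.
elim: k => [|k IH] H //=.
have IH' := IH (fun i Hi => H i (ltnW Hi)).
have [HL|HL] := classic (stp L k); last by rewrite (sb_false HL) addn0 (leq_trans IH') // leq_add // leq_addr.
rewrite (sb_true HL).
case: (H k (ltnSn k) HL) => HPQ.
  rewrite (sb_true HPQ); move: IH'; lia.
rewrite (sb_true HPQ); move: IH'; lia.
Qed.

Lemma nstrict_ext (B : comNzRingType) (L P : nat -> B -> Prop) k :
  (forall i, (i <= k)%N -> L i = P i) -> nstrict L k = nstrict P k.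
Proof.
elim: k => [|k IH] H //=.
rewrite IH; last by move=> i Hi; apply: H; apply: leqW.
by rewrite /stp (H k (leqnSn k)) (H k.+1 (leqnn _)).
Qed.

Lemma bW_mono (B : comNzRingType) (X X' Y Y' : B -> Prop) c c' :
  ideal_sub X X' -> ideal_sub Y' Y -> (c <= c')%N -> bW X Y c -> bW X' Y' c'.
Proof.
move=> HX HY Hc H L k [H1 H2]; apply: leq_trans Hc; apply: H; split => // i Hi.
have [? [? ?]] := H1 i Hi; split => //; split => x Hx; auto.
Qed.

Lemma modular (B : comNzRingType) (L L' Y : B -> Prop) :
  is_ideal L -> is_ideal L' -> is_ideal Y -> ideal_sub L L' ->
  ~ ideal_sub L' L -> ~ ideal_sub (capI L' Y) (capI L Y) \/ ~ ideal_sub (addI L' Y) (addI L Y).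
Proof.
move=> HL HL' HY HLL' Hn; apply: NNPP => Hc; apply: Hn => z Hz.
have H1 : ideal_sub (capI L' Y) (capI L Y) by apply: NNPP => h; apply: Hc; left.
have H2 : ideal_sub (addI L' Y) (addI L Y) by apply: NNPP => h; apply: Hc; right.
have [l [y [Hl [Hy Ez]]]] : addI L Y z.
  apply: H2; exists z, 0; split => //; split; last by rewrite addr0.
  exact: id0.
have Hy' : L y.
  have Ey : y = z - l by rewrite Ez addrC addKr.
  have [] // := H1 y; split => //; rewrite Ey; apply: idB => //; exact: HLL'.
by rewrite Ez; apply: idD.
Qed.

Lemma bW_add (B : comNzRingType) (X Y Z : B -> Prop) a b :
  is_ideal Y -> is_ideal Z -> ideal_sub X Y -> ideal_sub Y Z ->
  bW X Y a -> bW Y Z b -> bW X Z (a + b).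
Proof.
move=> HY HZ HXY HYZ Ha Hb L k [H1 H2].
pose P i := capI (L i) Y.
pose Q i := addI (L i) Y.
apply: leq_trans (nstrict_sum (P := P) (Q := Q) _) _.
  move=> i Hi Hs; have [HLi _] := H1 i (ltnW Hi); have [HLi' _] := H1 i.+1 Hi.
  exact: (modular HLi HLi' HY (H2 i Hi) Hs).
apply: leq_add.
  apply: Ha; split.
    move=> i Hi; have [HLi [HXL HLZ]] := H1 i Hi; split; first exact: capI_ideal.
    by split => x; [move=> Hx; split; auto | case].
  by move=> i Hi x [Hx Hy]; split => //; apply: H2.
apply: Hb; split.
  move=> i Hi; have [HLi [HXL HLZ]] := H1 i Hi; split; first exact: addI_ideal.
  split.
    move=> x Hx; exists 0, x; split; first exact: id0.
    by split => //; rewrite add0r.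
  by move=> x [l [y [Hl [Hy ->]]]]; apply: idD => //; auto.
by move=> i Hi x [l [y [Hl [Hy ->]]]]; exists l, y; split => //; apply: H2.
Qed.

Lemma bW_cyc (B : comNzRingType) (X K : B -> Prop) y c :
  is_ideal X -> (forall r, K r -> X (r * y)) -> bW K (@fullI B) c -> bW X (addx X y) c.
Proof.
move=> HX HK Hb L k [H1 H2].
pose P i := fun r => L i (r * y).
apply: leq_trans (nstrict_mono (P := P) _) _.
  move=> i Hi Hs Hsub; apply: Hs => z Hz.
  have [HLi [HXLi HLiY]] := H1 i (ltnW Hi).
  have [HLi' [HXLi' HLiY']] := H1 i.+1 Hi.
  have [x [r [Hx Ez]]] := HLiY' z Hz.
  have Hry : L i (r * y).
    apply: (Hsub r); rewrite /P.
    have -> : r * y = z - x by rewrite Ez addrC addKr.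
    by apply: idB => //; apply: HXLi'.
  by rewrite Ez; apply: idD => //; apply: HXLi.
apply: Hb; split.
  move=> i Hi; have [HLi [HXLi HLiY]] := H1 i Hi; split; last first.
    by split => // r Hr; apply: HXLi; apply: HK.
  split; first by rewrite /P mul0r; apply: id0.
  split; first by move=> r s Hr Hs; rewrite /P mulrDl; apply: idD.
  by move=> s r Hr; rewrite /P -mulrA; apply: idM.
by move=> i Hi r Hr; apply: H2.
Qed.

Lemma nstrict_const (B : comNzRingType) (X : B -> Prop) k : nstrict (fun _ => X) k = 0%N.
Proof. by elim: k => //= k ->; rewrite sb_false // /stp => h; apply: h. Qed.

Lemma bW_full0 (B : comNzRingType) (X Y : B -> Prop) :
  X 1 -> bW X Y 0.
Proof.
move=> H1 L k [HL HLi].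
rewrite leqn0 -(nstrict_const X k) eqn_leq; apply/andP; split; last first.
  by rewrite nstrict_const.
apply: nstrict_mono => i Hi Hs; exfalso; apply: Hs => z _.
have [HLid [HXL _]] := HL i (ltnW Hi).
exact: id1 (HXL _ H1).
Qed.

Lemma nstrict_shift (B : comNzRingType) (X : B -> Prop) (L : nat -> B -> Prop) k :
  nstrict (fun i => if i is i'.+1 then L i' else X) k.+1 = (sb (~ ideal_sub (L 0%N) X) + nstrict L k)%N.
Proof. by elim: k => [|k /= ->]; rewrite /= ?addn0 ?addnA. Qed.

Lemma bW_prepend (B : comNzRingType) (X X' Y : B -> Prop) c :
  is_ideal X -> ideal_sub X X' -> ~ ideal_sub X' X -> bW X Y c.+1 -> bW X' Y c.
Proof.
move=> HX HXX' Hn Hb L k [H1 H2].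
have := Hb (fun i => if i is i'.+1 then L i' else X) k.+1.
rewrite nstrict_shift sb_true; first last.
  move=> h; apply: Hn => x Hx; apply: h; have [_ [HX'L _]] := H1 0%N erefl; auto.
rewrite add1n ltnS; apply; split.
  case=> [|i] Hi /=.
    have [_ [HX'L HLY]] := H1 0%N erefl; split => //; split => // x Hx; auto.
  by have [? [? ?]] := H1 i Hi; split => //; split => // x Hx; auto.
case=> [|i] Hi /=.
  by have [_ [HX'L _]] := H1 0%N erefl; move=> x Hx; auto.
exact: H2.
Qed.

Lemma bW_append (B : comNzRingType) (X Y Y' : B -> Prop) c :
  is_ideal Y' -> ideal_sub Y Y' -> ~ ideal_sub Y' Y -> ideal_sub X Y ->
  bW X Y' c.+1 -> bW X Y c.
Proof.
move=> HY' HYY' Hn HXY Hb L k [H1 H2].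
pose L' i := if (i <= k)%N then L i else Y'.
have := Hb L' k.+1; rewrite /= (@nstrict_ext _ L' L); last first.
  by move=> i Hi; rewrite /L' Hi.
rewrite sb_true; first last.
  rewrite /stp /L' ltnn leqnn => h; apply: Hn => x Hx.
  have [_ [_ HLY]] := H1 k (leqnn k); exact: HLY (h x Hx).
rewrite addn1 ltnS; apply; split.
  move=> i Hi; rewrite /L'; case: leqP => Hik.
    by have [? [? ?]] := H1 i Hik; split => //; split => // x Hx; auto.
  by split => //; split => // x Hx; auto.
move=> i Hi; rewrite /L'; rewrite ltnS in Hi.
case: (leqP i.+1 k) => Hik.
  by rewrite (ltnW Hik); apply: H2.
rewrite Hi => x Hx; apply: HYY'; have [_ [_ HLY]] := H1 i Hi; auto.
Qed.

Lemma nstrict_all (B : comNzRingType) (L : nat -> B -> Prop) k :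
  (forall i, (i < k)%N -> stp L i) -> nstrict L k = k.
Proof.
elim: k => //= k IH H; rewrite IH; last by move=> i Hi; apply: H; apply: ltnW.
by rewrite sb_true ?addn1 //; apply: H.
Qed.

Lemma has_chain_le (B : comNzRingType) (X : B -> Prop) c k :
  bW X (@fullI B) c -> has_chain X k -> (k <= c)%N.
Proof.
move=> Hb [J [H1 H2]].
have <- : nstrict J k = k by apply: nstrict_all => i Hi; case: (H2 i Hi).
apply: Hb; split.
  by move=> i Hi; have [? ?] := H1 i Hi.
by move=> i Hi; case: (H2 i Hi).
Qed.

Lemma extract (B : comNzRingType) (X : B -> Prop) L k :
  weakch X (@fullI B) L k ->
  exists J, (forall i, (i <= nstrict L k)%N -> is_ideal (J i) /\ ideal_sub X (J i)) /\
    (forall i, (i < nstrict L k)%N -> ideal_sub (J i) (J i.+1) /\ ~ ideal_sub (J i.+1) (J i)) /\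
    ideal_sub (J (nstrict L k)) (L k) /\ ideal_sub (L k) (J (nstrict L k)).
Proof.
elim: k => [|k IH] [H1 H2].
  exists (fun _ => L 0%N); have [? [? _]] := H1 0%N erefl; split => //.
  by split => //; split => //; case.
have [J [HJ1 [HJ2 [HJ3 HJ4]]]] : exists J, (forall i, (i <= nstrict L k)%N -> is_ideal (J i) /\ ideal_sub X (J i)) /\
    (forall i, (i < nstrict L k)%N -> ideal_sub (J i) (J i.+1) /\ ~ ideal_sub (J i.+1) (J i)) /\
    ideal_sub (J (nstrict L k)) (L k) /\ ideal_sub (L k) (J (nstrict L k)).
  apply: IH; split; first by move=> i Hi; apply: H1; apply: leqW.
  by move=> i Hi; apply: H2; apply: ltnW.
have Hk := H2 k (ltnSn k).
set s := nstrict L k in HJ1 HJ2 HJ3 HJ4 *.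
rewrite /=; fold s.
have [Hs|Hs] := classic (stp L k); last first.
  have Hsub := NNPP _ Hs.
  rewrite sb_false // addn0; exists J; split => //; split => //; split.
    by move=> x Hx; apply: Hk; apply: HJ3.
  by move=> x Hx; apply: HJ4; apply: Hsub.
rewrite sb_true // addn1.
have [HLk1 [HXk1 _]] := H1 k.+1 (leqnn _).
exists (fun i => if (i <= s)%N then J i else L k.+1); split.
  move=> i Hi; case: leqP => Hik; first exact: HJ1.
  by split.
split; last by rewrite ltnn; split.
move=> i Hi; rewrite ltnS in Hi; rewrite Hi.
case: (ltnP i s) => Hi1.
  by apply: HJ2.
have Eis : i = s by apply/eqP; rewrite eqn_leq Hi Hi1.
rewrite Eis.
split.
  by move=> x Hx; apply: Hk; apply: HJ3.
by move=> h; apply: Hs => x Hx; apply: HJ3; apply: h.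
Qed.

Lemma max_nat (P : nat -> Prop) c : P 0%N -> (forall k, P k -> (k <= c)%N) ->
  exists n, P n /\ forall k, P k -> (k <= n)%N.
Proof.
elim: c => [|c IH] H0 Hb.
  by exists 0%N; split => // k /Hb.
have [Hc|Hc] := classic (P c.+1).
  by exists c.+1; split.
apply: IH => // k Hk; have := Hb k Hk; rewrite leq_eqVlt ltnS => /orP [/eqP Ek|//].
by rewrite Ek in Hk.
Qed.

Lemma colength_spec (B : comNzRingType) (X : B -> Prop) c :
  is_ideal X -> bW X (@fullI B) c ->
  has_chain X (colength X) /\ forall k, has_chain X k -> (k <= colength X)%N.
Proof.
move=> HX Hb; rewrite /colength.
apply: (epsilon_spec (inhabits 0%N) (fun n => has_chain X n /\ forall k, has_chain X k -> (k <= n)%N)).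
apply: (@max_nat _ c); last by move=> k; apply: has_chain_le.
exists (fun _ => X); split => // i _; split => //.
Qed.

Lemma bW_colength (B : comNzRingType) (X : B -> Prop) c :
  is_ideal X -> bW X (@fullI B) c -> bW X (@fullI B) (colength X).
Proof.
move=> HX Hb L k HL; have [_ Hmax] := colength_spec HX Hb; apply: Hmax.
have [J [H1 [H2 _]]] := extract HL; by exists J.
Qed.

Lemma colength_le (B : comNzRingType) (X : B -> Prop) c :
  is_ideal X -> bW X (@fullI B) c -> (colength X <= c)%N.
Proof.
move=> HX Hb; have [Hc _] := colength_spec HX Hb; exact: has_chain_le Hb Hc.
Qed.

Lemma colength_ge1 (B : comNzRingType) (X : B -> Prop) c :
  is_ideal X -> ~ X 1 -> bW X (@fullI B) c -> (1 <= colength X)%N.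
Proof.
move=> HX H1 Hb; have [_ Hmax] := colength_spec HX Hb; apply: Hmax.
exists (fun i => if i is 0%N then X else @fullI B); split.
  by case=> [|i] _; split.
case=> // _; split => // h; apply: H1; exact: h.
Qed.

Lemma ideal_not_sub (B : comNzRingType) (I J : B -> Prop) :
  ~ ideal_sub J I -> exists x, J x /\ ~ I x.
Proof. move=> H; apply: NNPP => h; apply: H => x Hx; apply: NNPP => h'; apply: h; by exists x. Qed.

Lemma max_exists (B : comNzRingType) (I : B -> Prop) :
  noetherian B -> Defs.proper_ideal I -> exists M, is_max_ideal M /\ ideal_sub I M.
Proof.
move=> HN HI; apply: NNPP => Hno.
have step : forall J, Defs.proper_ideal J -> ideal_sub I J ->
    exists J', Defs.proper_ideal J' /\ ideal_sub J J' /\ ~ ideal_sub J' J.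
  move=> J HJ HIJ; apply: NNPP => h; apply: Hno; exists J; split => //.
  split => // J' HJ' HJJ'.
  have [H1|H1] := classic (J' 1); first by right.
  left; split; last by apply: HJJ'.
  move=> Hx; apply: NNPP => h2; apply: h; exists J'; split; first by split.
  split => // h3; apply: h2; exact: h3.
pose pick J := epsilon (inhabits (fun _ : B => False))
   (fun J' => Defs.proper_ideal J' /\ ideal_sub J J' /\ ~ ideal_sub J' J).
pose K k := iter k pick I.
have HK : forall k, Defs.proper_ideal (K k) /\ ideal_sub I (K k).
  elim=> [|k [IH1 IH2]] /=; first by split.
  have := epsilon_spec (inhabits (fun _ : B => False))
   (fun J' => Defs.proper_ideal (J') /\ ideal_sub (K k) J' /\ ~ ideal_sub J' (K k)) (step _ IH1 IH2).
  move=> [H1 [H2 H3]]; split => //; move=> x Hx; apply: H2; exact: IH2.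
have HKs : forall k, ideal_sub (K k) (K k.+1) /\ ~ ideal_sub (K k.+1) (K k).
  move=> k; have [IH1 IH2] := HK k.
  have := epsilon_spec (inhabits (fun _ : B => False))
   (fun J' => Defs.proper_ideal (J') /\ ideal_sub (K k) J' /\ ~ ideal_sub J' (K k)) (step _ IH1 IH2).
  by move=> [_ [H2 H3]].
have [N HN'] := HN K (fun k => proj1 (proj1 (HK k))) (fun k => proj1 (HKs k)).
have [_ Hn] := HKs N; case: Hn => x Hx; exact: (proj1 (HN' N.+1 (leqnSn N) x) Hx).
Qed.

Lemma nl_ideal (B : comNzRingType) (n : B -> Prop) : noetherian_local n -> is_ideal n.
Proof. by case=> _ [[[]]]. Qed.
Lemma nl_1 (B : comNzRingType) (n : B -> Prop) : noetherian_local n -> ~ n 1.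
Proof. by case=> _ [[[]]]. Qed.

Lemma unit_out (B : comNzRingType) (n : B -> Prop) y :
  noetherian_local n -> ~ n y -> exists z, z * y = 1.
Proof.
move=> Hl Hy; pose P := fun w => exists r, w = r * y.
have HP : is_ideal P.
  split; first by exists 0; rewrite mul0r.
  split; first by move=> a b [r ->] [s ->]; exists (r + s); rewrite mulrDl.
  by move=> s w [r ->]; exists (s * r); rewrite mulrA.
have [[r Hr]|H1] := classic (P 1); first by exists r.
have [M [HM HPM]] := max_exists (proj1 Hl) (conj HP H1).
have [_ [_ Hloc]] := Hl.
exfalso; apply: Hy; apply: (proj1 (Hloc M HM y)); apply: HPM; exists 1; by rewrite mul1r.
Qed.

Lemma nl_pow (B : comNzRingType) (n : B -> Prop) y k :
  noetherian_local n -> n (y ^+ k) -> n y.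
Proof.
move=> Hl Hk; apply: NNPP => Hy; have [z Hz] := unit_out Hl Hy.
apply: (nl_1 Hl); have <- : z ^+ k * y ^+ k = 1 by rewrite -exprMn Hz expr1n.
by apply: idM => //; apply: nl_ideal.
Qed.

Definition zeroI (B : comNzRingType) : B -> Prop := fun y => y = 0.
Fixpoint gen (B : comNzRingType) (I : B -> Prop) (xs : seq B) : B -> Prop :=
  match xs with [::] => I | x :: r => gen (addx I x) r end.
Fixpoint allP (B : comNzRingType) (n : B -> Prop) (xs : seq B) : Prop :=
  match xs with [::] => True | x :: r => n x /\ allP n r end.

Lemma zeroI_ideal (B : comNzRingType) : is_ideal (@zeroI B).
Proof.
split; first by []. split; first by move=> x y -> ->; rewrite addr0.
by move=> r x ->; rewrite mulr0.
Qed.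
Lemma gen_ideal (B : comNzRingType) (xs : seq B) I : is_ideal I -> is_ideal (gen I xs).
Proof. by elim: xs I => [|x xs IH] I HI //=; apply: IH; apply: addx_ideal. Qed.
Lemma gen_sub (B : comNzRingType) (xs : seq B) I : ideal_sub I (gen I xs).
Proof. elim: xs I => [|x xs IH] I y Hy //=; apply: IH; exact: addx_sub. Qed.
Lemma gen_mono (B : comNzRingType) (xs : seq B) I J :
  ideal_sub I J -> ideal_sub (gen I xs) (gen J xs).
Proof.
elim: xs I J => [|x xs IH] I J HIJ //=; apply: IH.
by move=> y [i [r [Hi ->]]]; exists i, r; split => //; apply: HIJ.
Qed.

Lemma fg (B : comNzRingType) (n : B -> Prop) :
  noetherian B -> exists xs, allP n xs /\ ideal_sub n (gen (@zeroI B) xs).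
Proof.
move=> HN; apply: NNPP => Hno.
have step : forall xs, allP n xs -> exists y, n y /\ ~ gen (@zeroI B) xs y.
  move=> xs Hxs; apply: NNPP => h; apply: Hno; exists xs; split => // y Hy.
  apply: NNPP => h2; apply: h; by exists y.
pose pick xs := epsilon (inhabits (0 : B)) (fun y => n y /\ ~ gen (@zeroI B) xs y).
pose l := fix l k := if k is k'.+1 then pick (l k') :: l k' else [::].
have Hl : forall k, allP n (l k).
  elim=> [|k IH] //=; split => //.
  by have [] := epsilon_spec (inhabits (0 : B)) (fun y => n y /\ ~ gen (@zeroI B) (l k) y) (step _ IH).
pose K k := gen (@zeroI B) (l k).
have HKi : forall k, is_ideal (K k) by move=> k; apply: gen_ideal; apply: zeroI_ideal.
have HKs : forall k, ideal_sub (K k) (K k.+1).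
  move=> k; rewrite /K /=; apply: gen_mono; exact: addx_sub.
have [N HN'] := HN K HKi HKs.
have [Hy1 Hy2] := epsilon_spec (inhabits (0 : B)) (fun y => n y /\ ~ gen (@zeroI B) (l N) y) (step _ (Hl N)).
apply: Hy2; apply: (proj1 (HN' N.+1 (leqnSn N) _)).
rewrite /K /=; apply: gen_sub; apply: addx_in; exact: zeroI_ideal.
Qed.

Lemma bW_strict0 (B : comNzRingType) (I Y : B -> Prop) :
  is_ideal I -> is_ideal Y -> ideal_sub I Y -> ~ ideal_sub Y I -> bW I Y 0 -> False.
Proof.
move=> HI HY HIY Hn Hb.
have Hw : weakch I Y (fun i => if i is 0%N then I else Y) 1%N.
  split; first by case=> [|i] _; split => //; split => // x Hx.
  by case.
by have := Hb _ _ Hw; rewrite /= sb_true.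
Qed.

Lemma socle (B : comNzRingType) (n I : B -> Prop) c :
  noetherian_local n -> is_ideal I -> ~ I 1 -> bW I (@fullI B) c ->
  exists x, ~ I x /\ forall t, n t -> I (t * x).
Proof.
move=> Hl HI H1 Hb.
suff H : forall d x, ~ I x -> bW I (addx I x) d -> exists x, ~ I x /\ forall t, n t -> I (t * x).
  by apply: (H c 1) => //; apply: bW_mono Hb.
have Hn := nl_ideal Hl.
elim=> [|d IH] x Hx Hbx.
  exfalso; apply: bW_strict0 Hbx => //; first exact: addx_ideal.
    exact: addx_sub.
  by move=> h; apply: Hx; apply: h; apply: addx_in.
have [Hs|Hs] := classic (forall t, n t -> I (t * x)); first by exists x.
have [t [Ht Htx]] : exists t, n t /\ ~ I (t * x).
  apply: NNPP => h; apply: Hs => t Ht; apply: NNPP => h'; apply: h; by exists t.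
apply: (IH (t * x)) => //.
apply: (bW_append (Y' := addx I x)) => //.
- exact: addx_ideal.
- apply: addx_min; [exact: addx_ideal | exact: addx_sub |].
  by exists 0, t; split; [apply: id0 | rewrite add0r].
- move=> h; have [i [r [Hi Ex]]] := h x (addx_in x HI).
  have Hu : ~ n (1 - r * t).
    move=> h2; apply: (nl_1 Hl); have -> : 1 = (1 - r * t) + r * t by rewrite subrK.
    by apply: idD => //; apply: idM.
  have [z Hz] := unit_out Hl Hu.
  have Ei : i = (1 - r * t) * x by rewrite mulrBl mul1r {1}Ex -mulrA addrK.
  apply: Hx; have -> : x = z * i by rewrite Ei mulrA Hz mul1r.
  exact: idM.
- exact: addx_sub.
Qed.

Lemma bW_max (B : comNzRingType) (n I : B -> Prop) :
  is_max_ideal n -> ideal_sub n I -> bW I (@fullI B) 1.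
Proof.
move=> [_ Hmax] HnI L k [H1 H2].
suff : (nstrict L k <= sb (L k 1%R))%N by move=> h; apply: leq_trans h (sb_le1 _).
elim: k H1 H2 => [|k IH] H1 H2 //=.
have IH' := IH (fun i Hi => H1 i (leqW Hi)) (fun i Hi => H2 i (ltnW Hi)).
have [HLk [HILk _]] := H1 k (leqW (leqnn k)).
have [HLk1 [HILk1 _]] := H1 k.+1 (leqnn _).
have [Hs|Hs] := classic (stp L k); last first.
  rewrite sb_false // addn0; apply: leq_trans IH' _; apply: sb_le; exact: H2.
rewrite sb_true //.
have Hk1 : L k.+1 1.
  have [E|//] := Hmax _ HLk1 (fun x Hx => HILk1 _ (HnI _ Hx)).
  by exfalso; apply: Hs => x Hx; apply: HILk; apply: HnI; apply: (proj1 (E x)).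
have Hk0 : ~ L k 1 by move=> h; apply: Hs => x _; exact: id1 h.
by move: IH'; rewrite (sb_true Hk1) (sb_false Hk0) leqn0 => /eqP ->.
Qed.

Lemma FL (B : comNzRingType) (n : B -> Prop) (xs : seq B) (I : B -> Prop) :
  noetherian_local n -> allP n xs -> is_ideal I ->
  (forall t, n t -> exists e, I (t ^+ e)) -> ideal_sub n (gen I xs) ->
  exists c, bW I (@fullI B) c.
Proof.
move=> Hl; elim: xs I => [|x xs IH] I /= Hxs HI Hnil Hgen.
  by exists 1%N; apply: bW_max Hgen; case: Hl => _ [].
case: Hxs => Hx Hxs.
have [c' Hc'] : exists c', bW (addx I x) (@fullI B) c'.
  apply: IH => //; first exact: addx_ideal.
  by move=> t Ht; have [e He] := Hnil t Ht; exists e; apply: addx_sub.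
have [e He] := Hnil x Hx.
have Hj : forall j, bW (addx I (x ^+ j)) (@fullI B) (j * c').
  elim=> [|j IHj].
    apply: bW_full0; rewrite expr0; exact: addx_in.
  rewrite mulSn; apply: bW_add IHj.
  - exact: addx_ideal.
  - by [].
  - apply: addx_min; [exact: addx_ideal | exact: addx_sub |].
    by exists 0, x; split; [apply: id0 | rewrite add0r exprS].
  - by [].
  apply: bW_mono (bW_cyc (X := addx I (x ^+ j.+1)) (K := addx I x) (y := x ^+ j) _ _ Hc') => //.
  + by move=> z [i [r [Hi ->]]]; exists i, r; split => //; apply: addx_sub.
  + exact: addx_ideal.
  + move=> r [i [s [Hi ->]]]; exists (i * x ^+ j), s; split; first exact: idMr.
    by rewrite mulrDl -mulrA -exprS.
apply: (ex_intro _ (e * c')%N); apply: bW_mono (Hj e) => //.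
by apply: addx_min => //.
Qed.

Lemma ext_is_ideal (A B : comNzRingType) (u : A -> B) (a : A -> Prop) :
  is_ideal (ext_ideal u a).
Proof.
split; first by move=> J HJ _; apply: id0.
split; first by move=> x y Hx Hy J HJ Ha; apply: idD => //; [apply: Hx | apply: Hy].
by move=> r x Hx J HJ Ha; apply: idM => //; apply: Hx.
Qed.
Lemma ext_in (A B : comNzRingType) (u : A -> B) (a : A -> Prop) x :
  a x -> ext_ideal u a (u x).
Proof. by move=> Hx J HJ Ha; apply: Ha. Qed.
Lemma ext_min (A B : comNzRingType) (u : A -> B) (a : A -> Prop) (J : B -> Prop) :
  is_ideal J -> (forall x, a x -> J (u x)) -> ideal_sub (ext_ideal u a) J.
Proof. by move=> HJ Ha y Hy; apply: Hy. Qed.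

Definition rmP (A B : comNzRingType) (u : A -> B) : Prop :=
  u 0 = 0 /\ u 1 = 1 /\ (forall x y, u (x + y) = u x + u y) /\ (forall x y, u (x * y) = u x * u y).

Lemma rmP_rm (A B : comNzRingType) (f : {rmorphism A -> B}) : rmP f.
Proof. by split; [apply: rmorph0 | split; [apply: rmorph1 | split; [apply: rmorphD | apply: rmorphM]]]. Qed.
Lemma rmP_comp (A B C : comNzRingType) (u : A -> B) (v : B -> C) :
  rmP u -> rmP v -> rmP (v \o u).
Proof.
move=> [u0 [u1 [uD uM]]] [v0 [v1 [vD vM]]]; split; first by rewrite /= u0 v0.
split; first by rewrite /= u1 v1.
by split => x y /=; [rewrite uD vD | rewrite uM vM].
Qed.
Lemma rmP_iter (A : comNzRingType) (u : A -> A) k : rmP u -> rmP (iter k u).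
Proof.
move=> Hu; elim: k => [|k IH] /=; first by split => //; split.
have := rmP_comp IH Hu; by [].
Qed.

Lemma ext_comp (A B C : comNzRingType) (u : A -> B) (v : B -> C) (a : A -> Prop) :
  rmP v -> ideal_sub (ext_ideal v (ext_ideal u a)) (ext_ideal (v \o u) a).
Proof.
move=> [v0 [v1 [vD vM]]]; apply: ext_min; first exact: ext_is_ideal.
apply: (@ext_min _ _ u a (fun b => ext_ideal (v \o u) a (v b))).
  split; first by rewrite v0; apply: id0; apply: ext_is_ideal.
  split; first by move=> x y Hx Hy; rewrite vD; apply: (idD (ext_is_ideal _ _) Hx Hy).
  by move=> r x Hx; rewrite vM; apply: (idM _ (ext_is_ideal _ _) Hx).
by move=> x Hx; apply: (ext_in (u := v \o u)).
Qed.

Lemma LEN (A B C : comNzRingType) (n : B -> Prop) (u : A -> B) (v : B -> C) (a : A -> Prop) c1 c2 :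
  noetherian_local n -> rmP v -> bW (ext_ideal u a) (@fullI B) c1 ->
  bW (ext_ideal v n) (@fullI C) c2 ->
  bW (ext_ideal (v \o u) a) (@fullI C) (c1 * c2).
Proof.
move=> Hl Hv Hb1 Hb2.
have [v0 [v1 [vD vM]]] := Hv.
suff H : forall c I, is_ideal I -> bW I (@fullI B) c -> bW (ext_ideal v I) (@fullI C) (c * c2).
  apply: bW_mono (H c1 _ (ext_is_ideal u a) Hb1) => //; exact: ext_comp.
elim=> [|c IH] I HI HbI.
  have [H1|H1] := classic (I 1).
    by apply: bW_full0; rewrite -v1; apply: ext_in.
  by exfalso; apply: bW_strict0 HbI => // h; apply: H1; exact: h.
have [H1|H1] := classic (I 1).
  apply: (@bW_mono _ (ext_ideal v I) _ (@fullI C) _ 0%N) => //.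
  by apply: bW_full0; rewrite -v1; apply: ext_in.
have [x [Hx Hnx]] := socle Hl HI H1 HbI.
have HI' := addx_ideal x HI.
have Hb' : bW (addx I x) (@fullI B) c.
  apply: bW_prepend HbI => //; first exact: addx_sub.
  by move=> h; apply: Hx; apply: h; apply: addx_in.
have IH' := IH _ HI' Hb'.
have HE := ext_is_ideal v I.
rewrite mulSn; apply: (@bW_add _ _ (addx (ext_ideal v I) (v x))).
- exact: addx_ideal.
- by [].
- exact: addx_sub.
- by [].
- apply: bW_cyc Hb2 => //.
  apply: (@ext_min _ _ v n (fun r => ext_ideal v I (r * v x))).
    split; first by rewrite mul0r; apply: id0.
    split; first by move=> y z Hy Hz; rewrite mulrDl; apply: (idD HE Hy Hz).
    by move=> r y Hy; rewrite -mulrA; apply: (idM _ HE Hy).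
  by move=> t Ht; rewrite -vM; apply: ext_in; apply: Hnx.
- apply: bW_mono IH' => //.
  apply: ext_min; first exact: addx_ideal.
  move=> z [i [r [Hi ->]]]; rewrite vD vM; exists (v i), (v r); split => //.
  exact: ext_in.
Qed.

Lemma idpow (B : comNzRingType) (I : B -> Prop) x a c :
  is_ideal I -> I (x ^+ a) -> (a <= c)%N -> I (x ^+ c).
Proof. by move=> HI Ha Hac; rewrite -(subnK Hac) exprD; apply: idM. Qed.

Lemma radical_ideal (B : comNzRingType) (I : B -> Prop) : is_ideal I -> is_ideal (radical I).
Proof.
move=> HI; split; first by exists 1%N; rewrite expr1; apply: id0.
split.
  move=> x y [a Ha] [b Hb]; exists (a + b)%N; rewrite exprDn.
  elim/big_ind: _; first exact: id0.
    by move=> u w Hu Hw; apply: idD.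
  move=> [i Hi] _ /=; rewrite -mulr_natr; apply: idMr => //.
  case: (leqP b i) => Hbi.
    by apply: idM => //; apply: idpow Hb Hbi.
  apply: idMr => //; apply: idpow Ha _ => //; lia.
by move=> r x [k Hk]; exists k; rewrite exprMn; apply: idM.
Qed.

Lemma primary_of (B : comNzRingType) (m I : B -> Prop) :
  noetherian_local m -> is_ideal I -> ideal_sub I m -> ideal_sub m (radical I) ->
  primary_to I m.
Proof.
move=> Hl HI HIm HmI; split; first by split => // h; apply: (nl_1 Hl); apply: HIm.
split.
  move=> x y Hxy; have [Hy|Hy] := classic (m y); first by right; apply: HmI.
  have [z Hz] := unit_out Hl Hy; left.
  by rewrite -(mulr1 x) -Hz mulrCA; apply: idM.
move=> y; split; last exact: HmI.
by move=> [k Hk]; apply: (nl_pow (k := k) Hl); apply: HIm.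
Qed.

Lemma local_max (B : comNzRingType) (m : B -> Prop) : noetherian_local m -> is_max_ideal m.
Proof. by case=> _ []. Qed.

Lemma comp_fl (A B : comNzRingType) (m : A -> Prop) (n : B -> Prop)
  (f : {rmorphism A -> B}) (g : {rmorphism B -> A}) :
  noetherian_local m -> noetherian_local n ->
  finite_length_map f m n -> finite_length_map g n m -> finite_length_map (g \o f) m m.
Proof.
move=> Hm Hn [Hfl [_ [_ Hfr]]] [Hgl [_ [_ Hgr]]].
have Hloc : local_map (g \o f) m m by move=> x Hx; apply: Hgl; apply: Hfl.
split => //.
set I := ext_ideal (g \o f) m.
have HI : is_ideal I := ext_is_ideal _ _.
apply: primary_of => //.
  by apply: ext_min => //; apply: nl_ideal.
have HR := radical_ideal HI.
have Hgn : ideal_sub (ext_ideal g n) (radical I).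
  apply: ext_min => // s Hs.
  have [k Hk] := proj2 (Hfr s) Hs.
  exists k; rewrite -rmorphXn.
  apply: (ext_comp (u := f) (v := g) (a := m) (rmP_rm g)).
  exact: ext_in.
move=> t Ht; have [k Hk] := proj2 (Hgr t) Ht.
have [j Hj] := Hgn _ Hk; by exists (k * j)%N; rewrite exprM.
Qed.

Lemma fl_bound (A B : comNzRingType) (m : A -> Prop) (n : B -> Prop) (f : A -> B) :
  noetherian_local n -> finite_length_map f m n -> exists c, bW (ext_ideal f m) (@fullI B) c.
Proof.
move=> Hn [_ [_ [_ Hr]]].
have [xs [Hxs Hgen]] := fg n (proj1 Hn).
apply: (FL (xs := xs) Hn) => //; first exact: ext_is_ideal.
  by move=> t Ht; have [e He] := proj2 (Hr t) Ht; exists e.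
move=> x Hx; apply: (gen_mono (I := @zeroI B)) (Hgen x Hx).
move=> y ->; apply: id0; exact: ext_is_ideal.
Qed.

Lemma iter_local (A : comNzRingType) (m : A -> Prop) (psi : A -> A) k :
  local_map psi m m -> local_map (iter k psi) m m.
Proof. by move=> H; elim: k => [|k IH] x Hx //=; apply: H; apply: IH. Qed.

Lemma ext_proper (A B : comNzRingType) (m : A -> Prop) (n : B -> Prop) (u : A -> B) :
  noetherian_local n -> local_map u m n -> ~ ext_ideal u m 1.
Proof.
move=> Hn Hu H1; apply: (nl_1 Hn); apply: (ext_min (nl_ideal Hn) Hu H1).
Qed.

Lemma iter_bound (A : comNzRingType) (m : A -> Prop) (psi : A -> A) c k :
  noetherian_local m -> rmP psi -> bW (ext_ideal psi m) (@fullI A) c ->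
  exists c', bW (ext_ideal (iter k psi) m) (@fullI A) c'.
Proof.
move=> Hm Hp Hb; elim: k => [|k [c' IH]].
  exists 1%N; apply: (bW_max (local_max Hm)) => x Hx.
  exact: (@ext_in _ _ (iter 0 psi) m x Hx).
exists (c' * c)%N; have := LEN Hm Hp IH Hb; by [].
Qed.

Lemma seq_props (A : comNzRingType) (m : A -> Prop) (psi : A -> A) c :
  noetherian_local m -> rmP psi -> local_map psi m m -> bW (ext_ideal psi m) (@fullI A) c ->
  (forall k, bW (ext_ideal (iter k psi) m) (@fullI A) (map_length (iter k psi) m)) /\
  (forall k, (1 <= map_length (iter k psi) m)%N) /\
  (forall p q, (map_length (iter (p + q) psi) m <= map_length (iter p psi) m * map_length (iter q psi) m)%N).
Proof.
move=> Hm Hp Hloc Hb.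
have Hk : forall k, bW (ext_ideal (iter k psi) m) (@fullI A) (map_length (iter k psi) m).
  move=> k; have [c' Hc'] := iter_bound k Hm Hp Hb.
  exact: bW_colength (ext_is_ideal _ _) Hc'.
split => //; split.
  move=> k; have [c' Hc'] := iter_bound k Hm Hp Hb.
  apply: colength_ge1 (ext_is_ideal _ _) _ Hc'.
  exact: ext_proper Hm (iter_local k Hloc).
move=> p q.
have E : iter (p + q) psi = iter p psi \o iter q psi.
  by apply: functional_extensionality => x; rewrite iterD.
have H := LEN Hm (rmP_iter p Hp) (Hk q) (Hk p).
rewrite E /map_length mulnC; apply: colength_le (ext_is_ideal _ _) H.
Qed.

Lemma iter_cross (A B : Type) (f : A -> B) (g : B -> A) k :
  iter k.+1 (g \o f) = g \o (iter k (f \o g) \o f).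
Proof.
apply: functional_extensionality => x; elim: k => [|k IH] //.
change (g (f (iter k.+1 (g \o f) x)) = g (f (g (iter k (f \o g) (f x))))).
by rewrite IH.
Qed.

Lemma cross (A B : comNzRingType) (m : A -> Prop) (n : B -> Prop)
  (f : {rmorphism A -> B}) (g : {rmorphism B -> A}) cf cg k :
  noetherian_local n ->
  bW (ext_ideal f m) (@fullI B) cf -> bW (ext_ideal g n) (@fullI A) cg ->
  bW (ext_ideal (iter k (f \o g)) n) (@fullI B) (map_length (iter k (f \o g)) n) ->
  (map_length (iter k.+1 (g \o f)) m <= cf * map_length (iter k (f \o g)) n * cg)%N.
Proof.
move=> Hn Hf Hg Hk.
have H1 := LEN Hn (rmP_iter k (rmP_comp (rmP_rm g) (rmP_rm f))) Hf Hk.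
have H2 := LEN Hn (rmP_rm g) H1 Hg.
rewrite iter_cross /map_length; exact: colength_le (ext_is_ideal _ _) H2.
Qed.

Local Open Scope R_scope.

Lemma fek_mul (a : nat -> R) : (forall p q, a (p + q)%nat <= a p + a q) ->
  forall s Q r, a (s * Q + r)%nat <= INR s * a Q + a r.
Proof.
move=> Hs; elim=> [|s IH] Q r.
  rewrite /= Rmult_0_l Rplus_0_l; apply: Rle_refl.
have -> : (s.+1 * Q + r = Q + (s * Q + r))%nat by rewrite mulSn addnA.
apply: Rle_trans (Hs _ _) _. rewrite S_INR. have := IH Q r. lra.
Qed.

Lemma fek_lin (a : nat -> R) : (forall p q, a (p + q)%nat <= a p + a q) ->
  forall r, a r <= a 0%nat + INR r * a 1%nat.
Proof.
move=> Hs; elim=> [|r IH]. rewrite /= ; lra.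
have -> : (r.+1 = r + 1)%nat by rewrite addn1.
apply: Rle_trans (Hs _ _) _. rewrite plus_INR /=. lra.
Qed.

Lemma fekete (a : nat -> R) : (forall n, 0 <= a n) ->
  (forall p q, a (p + q)%nat <= a p + a q) ->
  exists h, Un_cv (fun n => a (S n) / INR (S n)) h /\
    (forall n, h <= a (S n) / INR (S n)) /\ 0 <= h.
Proof.
move=> Hpos Hs.
have Hq : forall n, 0 <= a (S n) / INR (S n).
  move=> n; apply: Rle_mult_inv_pos => //; apply: lt_0_INR; lia.
pose E := fun x => exists n, x = - (a (S n) / INR (S n)).
have HbE : bound E by exists 0 => x [n ->]; have := Hq n; lra.
have HnE : exists x, E x by exists (- (a 1%nat / INR 1)); exists 0%nat.
have [l [Hub Hlub]] := completeness E HbE HnE.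
have Hinf : forall n, - l <= a (S n) / INR (S n).
  move=> n; have := Hub _ (ex_intro _ n erefl); lra.
exists (- l); split; last split => //.
2: { have : l <= 0; last lra. apply: Hlub => x [n ->]; have := Hq n; lra. }
move=> eps Heps.
have [q Hqe] : exists q, a (S q) / INR (S q) < - l + eps / 2.
  apply: NNPP => Hno.
  have : l <= l - eps / 2; last lra.
  apply: Hlub => x [n ->].
  have : ~ (a (S n) / INR (S n) < - l + eps / 2) by move=> h; apply: Hno; exists n.
  lra.
set Q := S q in Hqe.
set x := a Q / INR Q in Hqe.
have HQ : 0 < INR Q by apply: lt_0_INR; rewrite /Q; lia.
have Hx : 0 <= x by apply: Hq.
set K := a 0%nat + INR Q * a 1%nat.
have HK : 0 <= K by have := Hpos 0%nat; have := Hpos 1%nat; rewrite /K; nra.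
have [N HN] : exists N : nat, 2 * K / eps < INR N.
  have [N0 HN0] := INR_unbounded (2 * K / eps). by exists N0.
exists N => n Hn.
rewrite /R_dist.
have HM : 0 < INR (S n) by apply: lt_0_INR; lia.
have HNM : INR N < INR (S n) by apply: lt_INR; lia.
have Hdm := Nat.div_mod (S n) Q ltac:(rewrite /Q; lia).
have Hmod := Nat.mod_upper_bound (S n) Q ltac:(rewrite /Q; lia).
set s := Nat.div (S n) Q in Hdm.
set r := Nat.modulo (S n) Q in Hdm Hmod.
have Ha : a (S n) <= INR s * a Q + K.
  have E1 : S n = (s * Q + r)%N by rewrite Hdm mulnC.
  rewrite E1.
  apply: Rle_trans (fek_mul Hs _ _ _) _.
  have := fek_lin Hs r.
  have : INR r <= INR Q by apply: le_INR; lia.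
  have := Hpos 1%nat. rewrite /K. nra.
have HsQ : INR s * INR Q <= INR (S n).
  rewrite -mult_INR; apply: le_INR; lia.
have HaQ : a Q = x * INR Q by rewrite /x; field; lra.
have Ha2 : a (S n) <= INR (S n) * x + K.
  rewrite HaQ in Ha; nra.
have HKe : K < eps / 2 * INR (S n).
  have : 2 * K / eps * eps = 2 * K by field; lra.
  nra.
have Hup : a (S n) / INR (S n) < - l + eps.
  apply: (Rmult_lt_reg_r (INR (S n))) => //.
  have -> : a (S n) / INR (S n) * INR (S n) = a (S n) by field; lra.
  nra.
have := Hinf n => Hi.
rewrite Rabs_right; lra.
Qed.

Lemma cmp_lim (a b : nat -> R) (C h1 h2 : R) : 0 <= C -> (forall n, 0 <= b n) ->
  (forall k, a (S k) <= C + b k) ->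
  (forall n, h1 <= a (S n) / INR (S n)) ->
  Un_cv (fun n => b (S n) / INR (S n)) h2 -> h1 <= h2.
Proof.
move=> HC Hb Hab Hinf Hcv.
apply: le_epsilon => e He.
have [N1 HN1] := Hcv (e / 2) ltac:(lra).
have [N2 HN2] := INR_unbounded (2 * C / e).
set n := Nat.max N1 N2.
have H1 := HN1 n ltac:(rewrite /n; lia).
rewrite /R_dist in H1.
have Hn2 : INR N2 <= INR n by apply: le_INR; rewrite /n; lia.
have HM : 0 < INR (S n) by apply: lt_0_INR; lia.
have HM2 : INR (S n) < INR (S (S n)) by apply: lt_INR; lia.
have Hi := Hinf (S n).
have Ha := Hab (S n).
have Hbn := Hb (S n).
have Hx : b (S n) / INR (S n) < h2 + e / 2.
  move: H1 => /Rabs_def2 [? ?]; lra.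
set y := b (S n) / INR (S n) in Hx.
have Hby : b (S n) = y * INR (S n) by rewrite /y; field; lra.
have Hy : 0 <= y by rewrite /y; apply: Rle_mult_inv_pos.
set M := INR (S (S n)) in Hi HM2.
have HCe : C < e / 2 * M.
  have E2 : 2 * C / e * e = 2 * C by field; lra.
  have : INR n < INR (S n) by apply: lt_INR; lia.
  move=> ?; have HM3 : 2 * C / e < M by lra.
  have : (M - 2 * C / e) * e > 0 by apply: Rmult_lt_0_compat; lra.
  nra.
have : a (S (S n)) <= M * (h2 + e) ; last first.
  move=> Hf. have : a (S (S n)) / M <= h2 + e.
    apply: (Rmult_le_reg_r M); first lra.
    have -> : a (S (S n)) / M * M = a (S (S n)) by field; lra.
    lra.
  lra.
rewrite Hby in Ha. nra.
Qed.

Lemma Rln_le (x y : R) : 0 < x -> x <= y -> ln x <= ln y.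
Proof.
move=> Hx Hxy; case: (Rle_lt_or_eq_dec _ _ Hxy) => H.
  by apply: Rlt_le; apply: ln_increasing.
by rewrite H; apply: Rle_refl.
Qed.

Lemma lnINR_ge0 (x : nat) : (1 <= x)%N -> 0 <= ln (INR x).
Proof.
move=> H; rewrite -ln_1; apply: Rln_le; first lra.
have -> : 1 = INR 1 by []. apply: le_INR; exact/leP.
Qed.

Lemma lnINR_le (x y : nat) : (1 <= x)%N -> (x <= y)%N -> ln (INR x) <= ln (INR y).
Proof.
move=> H1 H2; apply: Rln_le.
  apply: lt_0_INR; apply/ltP; exact: H1.
apply: le_INR; exact/leP.
Qed.

Lemma lnINR_mul (x y : nat) : (1 <= x)%N -> (1 <= y)%N -> ln (INR (x * y)%N) = ln (INR x) + ln (INR y).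
Proof.
move=> H1 H2; rewrite mult_INR; apply: ln_mult; apply: lt_0_INR; apply/ltP; by [].
Qed.

Lemma real_main (LR LS : nat -> nat) (C1 : nat) :
  (forall k, 1 <= LR k)%N -> (forall k, 1 <= LS k)%N -> (1 <= C1)%N ->
  (forall p q, LR (p + q)%N <= LR p * LR q)%N ->
  (forall p q, LS (p + q)%N <= LS p * LS q)%N ->
  (forall k, LR k.+1 <= C1 * LS k)%N -> (forall k, LS k.+1 <= C1 * LR k)%N ->
  exists h, Un_cv (fun n => Rdiv (ln (INR (LR n.+1))) (INR n.+1)) h /\
            Un_cv (fun n => Rdiv (ln (INR (LS n.+1))) (INR n.+1)) h.
Proof.
move=> HR1 HS1 HC HR2 HS2 XR XS.
pose a k := ln (INR (LR k)).
pose b k := ln (INR (LS k)).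
have Ha0 : forall k, 0 <= a k by move=> k; apply: lnINR_ge0.
have Hb0 : forall k, 0 <= b k by move=> k; apply: lnINR_ge0.
have Hsa : forall p q, a (p + q)%nat <= a p + a q.
  move=> p q; rewrite /a -lnINR_mul //; apply: lnINR_le => //.
have Hsb : forall p q, b (p + q)%nat <= b p + b q.
  move=> p q; rewrite /b -lnINR_mul //; apply: lnINR_le => //.
have HC0 : 0 <= ln (INR C1) by apply: lnINR_ge0.
have Xa : forall k, a (S k) <= ln (INR C1) + b k.
  move=> k; rewrite /a /b -lnINR_mul //; apply: lnINR_le => //.
have Xb : forall k, b (S k) <= ln (INR C1) + a k.
  move=> k; rewrite /a /b -lnINR_mul //; apply: lnINR_le => //.
have [h1 [Hc1 [Hi1 _]]] := fekete Ha0 Hsa.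
have [h2 [Hc2 [Hi2 _]]] := fekete Hb0 Hsb.
have E1 := cmp_lim HC0 Hb0 Xa Hi1 Hc2.
have E2 := cmp_lim HC0 Ha0 Xb Hi2 Hc1.
exists h1; split; first exact: Hc1.
have -> : h1 = h2 by lra.
exact: Hc2.
Qed.

Local Close Scope R_scope.

Theorem mainTheorem12 (A B : comNzRingType) (m : A -> Prop) (n : B -> Prop)
  (f : {rmorphism A -> B}) (g : {rmorphism B -> A}) :
  noetherian_local m -> noetherian_local n ->
  finite_length_map f m n -> finite_length_map g n m ->
  finite_length_map (g \o f) m m /\ finite_length_map (f \o g) n n /\
  exists h : R, has_alg_entropy (g \o f) m h /\ has_alg_entropy (f \o g) n h.
Proof.
move=> Hm Hn Hf Hg.
have Hgf := comp_fl Hm Hn Hf Hg.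
have Hfg := comp_fl Hn Hm Hg Hf.
split => //; split => //.
have [cf Hcf] := fl_bound Hn Hf.
have [cg Hcg] := fl_bound Hm Hg.
have Hpsi := LEN Hn (rmP_rm g) Hcf Hcg.
have Hphi := LEN Hm (rmP_rm f) Hcg Hcf.
have [HR1 [HR2 HR3]] := seq_props Hm (rmP_comp (rmP_rm f) (rmP_rm g)) (proj1 Hgf) Hpsi.
have [HS1 [HS2 HS3]] := seq_props Hn (rmP_comp (rmP_rm g) (rmP_rm f)) (proj1 Hfg) Hphi.
have Hcf' := bW_colength (ext_is_ideal _ _) Hcf.
have Hcg' := bW_colength (ext_is_ideal _ _) Hcg.
have Hcf1 : (1 <= colength (ext_ideal f m))%N.
  apply: colength_ge1 (ext_is_ideal _ _) _ Hcf; exact: ext_proper Hn (proj1 Hf).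
have Hcg1 : (1 <= colength (ext_ideal g n))%N.
  apply: colength_ge1 (ext_is_ideal _ _) _ Hcg; exact: ext_proper Hm (proj1 Hg).
apply: (real_main
  (LR := fun k => map_length (iter k (g \o f)) m)
  (LS := fun k => map_length (iter k (f \o g)) n)
  (C1 := (colength (ext_ideal f m) * colength (ext_ideal g n))%N)
  HR2 HS2 _ HR3 HS3 _ _).
- by rewrite muln_gt0 Hcf1 Hcg1.
- move=> k; apply: leq_trans (cross Hn Hcf' Hcg' (HS1 k)) _.
  by rewrite mulnAC.
- move=> k; apply: leq_trans (cross Hm Hcg' Hcf' (HR1 k)) _.
  by rewrite mulnAC (mulnC (colength (ext_ideal g n))).
Qed.
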